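(* Let $A$ be a finite nonempty set and $M\subseteq A^A$. Then $\overline{M}=\mathrm{End}\,\mathrm{gQuord}\,M$.
   Context: A relation $\rho\subseteq A^m$ is a generalized quasiorder if it is reflexive ($(a,\dots,a)\in\rho$ for all $a$) and transitive: for every $m\times m$-matrix over $A$ all of whose rows and columns belong to $\rho$, its diagonal belongs to $\rho$. $\mathrm{gQuord}(A)$ denotes the set of all generalized quasiorders on $A$ (of all arities). A unary map $h$ preserves $\rho$ if $(h x_1,\dots,h x_m)\in\rho$ whenever $(x_1,\dots,x_m)\in\rho$. For $M\subseteq A^A$, $\mathrm{gQuord}\,M$ is the set of all $\rho\in\mathrm{gQuord}(A)$ preserved by every $h\in M$; for $Q\subseteq\mathrm{gQuord}(A)$, $\mathrm{End}\,Q$ is the set of all $h\in A^A$ preserving every $\rho\in Q$. A translation of an $n$-ary operation $f$ is a unary map $x\mapsto f(a_1,\dots,a_{i-1},x,a_{i+1},\dots,a_n)$ with fixed $a_j\in A$; $\mathrm{trl}(f)$ is the set of translations ($\{f\}$ for unary $f$); $N^*:=\{f\mid \mathrm{trl}(f)\subseteq N\}$. The u-closure $\overline M$ is the intersection of all monoids $N$ with $M\subseteq N\le A^A$ such that $N^*$ is a clone. *)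

(* Defs.v *)
From mathcomp Require Import all_boot.
Set Implicit Arguments. Unset Strict Implicit. Unset Printing Implicit Defensive.

Section GQuord.
Variable A : finType.

Definition umap := {ffun A -> A}.

Definition relation (m : nat) := {set {ffun 'I_m -> A}}.

Definition reflexive_rel m (rho : relation m) : Prop :=
  forall a : A, [ffun _ : 'I_m => a] \in rho.

Definition transitive_rel m (rho : relation m) : Prop :=
  forall X : 'I_m -> 'I_m -> A,
    (forall i, [ffun j => X i j] \in rho) ->
    (forall j, [ffun i => X i j] \in rho) ->
    [ffun i => X i i] \in rho.

Definition is_gquord m (rho : relation m) : Prop :=
  reflexive_rel rho /\ transitive_rel rho.

Definition preserves (h : umap) m (rho : relation m) : Prop :=
  forall x, x \in rho -> [ffun i => h (x i)] \in rho.

Definition gQuord (M : {set umap}) (m : nat) (rho : relation m) : Prop :=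
  is_gquord rho /\ forall h, h \in M -> preserves h rho.

Definition End_ (Q : forall m, relation m -> Prop) (h : umap) : Prop :=
  forall m (rho : relation m), Q m rho -> preserves h rho.

Definition op (n : nat) := ('I_n -> A) -> A.

Definition translation n (f : op n) (i : 'I_n) (a : 'I_n -> A) : umap :=
  [ffun x => f (fun j => if j == i then x else a j)].

Definition star (N : {set umap}) (n : nat) (f : op n) : Prop :=
  forall (i : 'I_n) (a : 'I_n -> A), translation f i a \in N.

Definition is_clone (C : forall n, op n -> Prop) : Prop :=
  (forall n (i : 'I_n), C n (fun x => x i)) /\
  (forall n m (f : op n) (g : 'I_n -> op m), 0 < n -> 0 < m ->
     C n f -> (forall i, C m (g i)) -> C m (fun x => f (fun i => g i x))).

Definition is_monoid (N : {set umap}) : Prop :=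
  [ffun x => x] \in N /\
  forall g h, g \in N -> h \in N -> [ffun x => g (h x)] \in N.

Definition u_closure (M : {set umap}) (h : umap) : Prop :=
  forall N : {set umap}, is_monoid N -> M \subset N -> is_clone (star N) ->
    h \in N.

End GQuord.

(* Main.v *)
Require Import Defs.
From mathcomp Require Import all_boot.
From Stdlib Require Import ClassicalEpsilon FunctionalExtensionality.
Set Implicit Arguments. Unset Strict Implicit.

Section S.
Variable A : finType.

Lemma memE (T : finType) (S : {set T}) x y : x \in S -> x = y -> y \in S.
Proof. by move=> H <-. Qed.

Lemma poly_lemma m (rho : relation A m) n (f : op A n) (a0 : 'I_n -> A) :
  is_gquord rho ->
  (forall k b, preserves (translation f k b) rho) ->
  forall u : 'I_n -> {ffun 'I_m -> A}, (forall i, u i \in rho) ->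
  [ffun l => f (fun i => u i l)] \in rho.
Proof.
move=> [Hr Ht] Hf u Hu.
suff P : forall k a, [ffun l => f (fun i => if i < k then u i l else a i)] \in rho.
  move: (P n a0); move/memE; apply; apply/ffunP => l; rewrite !ffunE.
  by congr f; apply: functional_extensionality_dep => i; rewrite ltn_ord.
elim=> [|k IH] a.
  move: (Hr (f a)); move/memE; apply; apply/ffunP => l; rewrite !ffunE.
  by congr f; apply: functional_extensionality_dep => i.
case: (ltnP k n) => [kn|nk]; last first.
  move: (IH a); move/memE; apply; apply/ffunP => l; rewrite !ffunE.
  congr f; apply: functional_extensionality_dep => i.
  by rewrite (leq_trans (ltn_ord i) nk) (leq_trans (ltn_ord i) (leqW nk)).
pose kk := Ordinal kn.
pose X := fun i j : 'I_m => f (fun t => if t < k then u t j else if t == kk then u kk i else a t).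
have := Ht X.
have -> : [ffun i => X i i] = [ffun l => f (fun i => if i < k.+1 then u i l else a i)].
  apply/ffunP => l; rewrite !ffunE /X; congr f; apply: functional_extensionality_dep => t.
  have tk : (t == kk) = (nat_of_ord t == k) by [].
  case: (ltngtP t k) => h.
  - by rewrite ltnS (ltnW h).
  - by rewrite ltnS leqNgt h /= tk gtn_eqF.
  - have -> : t = kk by apply: val_inj.
    by rewrite eqxx /= ltnS leqnn.
move=> H; apply: H.
  move=> i; move: (IH [ffun t : 'I_n => if t == kk then u kk i else a t]).
  move/memE; apply; apply/ffunP => j; rewrite !ffunE /X; congr f.
  by apply: functional_extensionality_dep => t; rewrite ffunE.
move=> j.
move: (Hf kk [ffun t : 'I_n => if t < k then u t j else a t] _ (Hu kk)).
move/memE; apply; apply/ffunP => i; rewrite !ffunE /X; congr f.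
apply: functional_extensionality_dep => t; rewrite ffunE.
have tk : (t == kk) = (nat_of_ord t == k) by [].
rewrite tk; case: eqP => [->|//]; by rewrite ltnn.
Qed.

Definition pb (P : Prop) : bool := if excluded_middle_informative P then true else false.
Lemma pbP P : reflect P (pb P).
Proof. by rewrite /pb; case: excluded_middle_informative => H; constructor. Qed.

Lemma const_pres m (rho : relation A m) c :
  reflexive_rel rho -> preserves [ffun _ => c] rho.
Proof.
move=> Hr x _; move: (Hr c); move/memE; apply; apply/ffunP => i; by rewrite !ffunE.
Qed.

Lemma dir1 (HA : 0 < #|A|) (M : {set umap A}) h :
  u_closure M h -> End_ (gQuord M) h.
Proof.
have [x0 _] := card_gt0P HA.
move=> Hu; set N := [set g | pb (End_ (gQuord M) g)].
have HN : forall g, g \in N -> End_ (gQuord M) g by move=> g; rewrite inE => /pbP.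
have NH : forall g, End_ (gQuord M) g -> g \in N by move=> g H; rewrite inE; apply/pbP.
apply: (HN); apply: Hu.
- split.
    apply: (NH) => m rho _ x Hx; move: Hx; move/memE; apply; apply/ffunP => i; by rewrite !ffunE.
  move=> g h' /HN Hg /HN Hh; apply: (NH) => m rho Hr x Hx.
  move: (Hg _ _ Hr _ (Hh _ _ Hr _ Hx)); move/memE; apply; apply/ffunP => i; by rewrite !ffunE.
- apply/subsetP => g Hg; apply: (NH) => m rho [_ H]; exact: H.
split.
  move=> n i k a; apply: (NH) => m rho [[Hr Ht] _].
  case: (eqVneq i k) => [->|ne].
    move=> x Hx; move: Hx; move/memE; apply; apply/ffunP => l; by rewrite !ffunE eqxx.
  have -> : translation (fun x : 'I_n -> A => x i) k a = [ffun _ => a i].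
    by apply/ffunP => y; rewrite !ffunE (negbTE ne).
  exact: const_pres.
move=> n m f g n0 m0 Hf Hg k a; apply: (NH) => p rho [Hq HM] x Hx.
have -> : [ffun l => translation (fun x => f (fun i => g i x)) k a (x l)] =
  [ffun l => f (fun i => [ffun l' => translation (g i) k a (x l')] l)].
  apply/ffunP => l; rewrite !ffunE; congr f; apply: functional_extensionality_dep => i; by rewrite !ffunE.
apply: (poly_lemma (fun _ => x0) Hq).
  move=> k' b; apply: (HN _ (Hf k' b)); by split.
move=> i; apply: (HN _ (Hg i k a)) => //; by split.
Qed.

Lemma dir2 (HA : 0 < #|A|) (M : {set umap A}) h :
  End_ (gQuord M) h -> u_closure M h.
Proof.
have [x0 _] := card_gt0P HA.
move=> He N [Hid Hcomp] HMN [Hproj Hcompo].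
pose rho : relation A #|A| := [set [ffun i => (g : umap A) (enum_val i)] | g in N].
have Hconst : forall c, [ffun _ : A => c] \in N.
  move=> c; move: (Hproj 2 ord0 ord_max (fun _ => c)); move/memE; apply.
  by apply/ffunP => y; rewrite !ffunE.
have inrho : forall x, x \in rho -> exists2 g, g \in N & forall i, x i = g (enum_val i).
  move=> x /imsetP [g Hg ->]; exists g => // i; by rewrite ffunE.
have rhoin : forall (g : umap A) (x : {ffun 'I_#|A| -> A}), g \in N -> (forall i, x i = g (enum_val i)) -> x \in rho.
  move=> g x Hg Hx; apply/imsetP; exists g => //; apply/ffunP => i; by rewrite ffunE.
have Hq : is_gquord rho.
  split.
    move=> c; apply: (rhoin _ _ (Hconst c)) => i; by rewrite !ffunE.
  move=> X Hrow Hcol.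
  have Hc : forall j, [ffun x => X (enum_rank x) j] \in N.
    move=> j; have [g Hg E] := inrho _ (Hcol j); move: Hg; move/memE; apply.
    by apply/ffunP => x; move: (E (enum_rank x)); rewrite !ffunE enum_rankK.
  have Hr : forall i, [ffun y => X i (enum_rank y)] \in N.
    move=> i; have [g Hg E] := inrho _ (Hrow i); move: Hg; move/memE; apply.
    by apply/ffunP => x; move: (E (enum_rank x)); rewrite !ffunE enum_rankK.
  pose F : op A 2 := fun v => X (enum_rank (v ord0)) (enum_rank (v ord_max)).
  have HF : star N F.
    move=> i a; case: (eqVneq i ord0) => [->|ne].
      move: (Hc (enum_rank (a ord_max))); move/memE; apply.
      by apply/ffunP => x; rewrite !ffunE.
    have -> : i = ord_max by apply: val_inj; move: ne (ltn_ord i); case: i => [[|[|]]].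
    move: (Hr (enum_rank (a ord0))); move/memE; apply.
    by apply/ffunP => x; rewrite !ffunE.
  have := Hcompo 2 1 F (fun _ x => x ord0) erefl erefl HF (fun _ => Hproj 1 ord0).
  move=> /(_ ord0 (fun _ => x0)) HD.
  apply: (rhoin _ _ HD) => i; rewrite !ffunE /F /=. have e : enum_rank (enum_val i) = i by apply: enum_val_inj; rewrite enum_rankK.
  by rewrite e.
have Hx : [ffun i => enum_val i] \in rho.
  apply: (rhoin _ _ Hid) => i; by rewrite !ffunE.
have Hpres : preserves h rho.
  apply: He; split => // m Hm x /inrho [g Hg E].
  apply: (rhoin _ _ (Hcomp _ _ (subsetP HMN _ Hm) Hg)) => i; by rewrite !ffunE E.
have [g Hg E] := inrho _ (Hpres _ Hx).
move: Hg; move/memE; apply; apply/ffunP => y.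
by move: (E (enum_rank y)); rewrite !ffunE enum_rankK => ->.
Qed.
End S.

Theorem theorem4p2 (A : finType) (HA : 0 < #|A|) (M : {set umap A}) :
  forall h : umap A, u_closure M h <-> End_ (gQuord M) h.
Proof.
move=> h; split; [exact: dir1 | exact: dir2].
Qed.
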